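(* Let $n$ be a natural number, let $g,d$ be annotated terms, and let $M$ be a correct memo map. Write $(b,M'')=\mathrm{decideMemo}(n,g,d,M)$. Then: 1. $M''$ is a correct memo map; and 2. if $b=\mathrm{true}$, then there exists a natural number $k$ with $\mathrm{decide}(k,g,d)=\mathrm{true}$.
   Context: Terms are generated by the grammar $t ::= \mathrm{Var}(k) \mid \mathrm{Meet}(t,t) \mid \mathrm{Join}(t,t) \mid \mathrm{Not}(t)$, where $k$ ranges over positive integers. An annotated term is either $N$, $L\,t$ or $R\,t$ for a term $t$. The fuel-bounded proof-search function $\mathrm{decide}(n,g,d)\in\{\mathrm{true},\mathrm{false}\}$ is defined recursively. First, $\mathrm{decide}(0,g,d)=\mathrm{false}$. Second, $\mathrm{decide}(n+1,g,d)=\mathrm{true}$ iff at least one of the following holds, where every recursive call uses fuel $n$: - $g=L\,\mathrm{Var}(a)$ and $d=R\,\mathrm{Var}(a)$; - $\mathrm{decide}(n,g,N)$; - $d=N$ and $\mathrm{decide}(n,g,g)$; - $g=L\,\mathrm{Meet}(a,b)$ and $\mathrm{decide}(n,L\,a,d)$; - $g=L\,\mathrm{Meet}(a,b)$ and $\mathrm{decide}(n,L\,b,d)$; - $g=L\,\mathrm{Join}(a,b)$ and both $\mathrm{decide}(n,L\,a,d)$ and $\mathrm{decide}(n,L\,b,d)$; - $g=L\,\mathrm{Not}(a)$ and $\mathrm{decide}(n,R\,a,d)$; - $g=R\,\mathrm{Join}(a,b)$ and $\mathrm{decide}(n,R\,a,d)$; - $g=R\,\mathrm{Join}(a,b)$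 and $\mathrm{decide}(n,R\,b,d)$; - $g=R\,\mathrm{Meet}(a,b)$ and both $\mathrm{decide}(n,R\,a,d)$ and $\mathrm{decide}(n,R\,b,d)$; - $g=R\,\mathrm{Not}(a)$ and $\mathrm{decide}(n,L\,a,d)$; - $\mathrm{decide}(n,d,g)$. A memo map is a finite partial function $M$ from pairs of annotated terms to $\{\mathrm{true},\mathrm{false}\}$. The memo map $M$ is correct if for every pair $(g',d')$ with $M(g',d')=\mathrm{true}$ there exists $k$ with $\mathrm{decide}(k,g',d')=\mathrm{true}$. In particular, the empty map is correct. The memoized search $\mathrm{decideMemo}(n,g,d,M)$ returns a pair consisting of a boolean and a memo map, and is defined as follows. - If $M(g,d)$ is defined and equal to $b$, it returns $(b,M)$. - Otherwise it computes a pair $(b,M')$ and returns $(b,M'[(g,d)\mapsto b])$. Here $M'[(g,d)\mapsto b]$ is $M'$ updated so that $(g,d)$ is mapped to $b$. The pair $(b,M')$ is computed as follows. - If $n=0$, then $(b,M')=(\mathrm{false},M)$. - If $n=m+1$, it is obtained by evaluating the same disjunction of cases as in the definition of $\mathrm{decide}(m+1,g,d)$, in the same order. Each recursive call $\mathrm{decide}(m,g_1,d_1)$ is replaced by $\mathrm{decideMemo}(m,g_1,d_1,\cdot)$, and the memo map is threaded sequentially as follows: - A case whose pattern condition on $g,d$ fails yields $(\mathrm{false},\text{current map})$. - For a disjunction $A\vee B$: run $A$ on the current map, getting $(x,M_1)$. If $x=\mathrm{true}$, the result is $(\mathrm{true},M_1)$; otherwise the result is that of running $B$ on $M_1$. -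 For a conjunction $A\wedge B$: run $A$ on the current map, getting $(x,M_1)$. If $x=\mathrm{false}$, the result is $(\mathrm{false},M_1)$; otherwise the result is that of running $B$ on $M_1$. *)

(* Defs.v *)
From Stdlib Require Import PArith List Bool.
Import ListNotations.

Inductive term : Type :=
| Var : positive -> term
| Meet : term -> term -> term
| Join : term -> term -> term
| Not : term -> term.

Inductive aterm : Type :=
| N : aterm
| L : term -> aterm
| R : term -> aterm.

Definition term_eq_dec : forall x y : term, {x = y} + {x <> y}.
Proof. decide equality; apply Pos.eq_dec. Defined.

Definition aterm_eq_dec : forall x y : aterm, {x = y} + {x <> y}.
Proof. decide equality; apply term_eq_dec. Defined.

Definition pair_eq_dec : forall x y : aterm * aterm, {x = y} + {x <> y}.
Proof. decide equality; apply aterm_eq_dec. Defined.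

Fixpoint decide (n : nat) (g d : aterm) : bool :=
  match n with
  | O => false
  | S m =>
      (match g, d with
       | L (Var a), R (Var b) => if Pos.eq_dec a b then true else false
       | _, _ => false end)
      || decide m g N
      || (match d with N => decide m g g | _ => false end)
      || (match g with L (Meet a b) => decide m (L a) d | _ => false end)
      || (match g with L (Meet a b) => decide m (L b) d | _ => false end)
      || (match g with L (Join a b) => decide m (L a) d && decide m (L b) d
                  | _ => false end)
      || (match g with L (Not a) => decide m (R a) d | _ => false end)
      || (match g with R (Join a b) => decide m (R a) d | _ => false end)
      || (match g with R (Join a b) => decide m (R b) d | _ => false end)
      || (match g with R (Meet a b) => decide m (R a) d && decide m (R b) d
                  | _ => false end)
      || (match g with R (Not a) => decide m (L a) d | _ => false end)
      || decide m d g
  end.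

(* Memo maps: finite partial functions from pairs of annotated terms to bool,
   represented as association lists (the first binding for a key wins). *)
Definition memo := list ((aterm * aterm) * bool).

Fixpoint lookup (M : memo) (k : aterm * aterm) : option bool :=
  match M with
  | [] => None
  | (k', v) :: M' => if pair_eq_dec k k' then Some v else lookup M' k
  end.

Definition update (M : memo) (k : aterm * aterm) (b : bool) : memo := (k, b) :: M.

Definition memo_correct (M : memo) : Prop :=
  forall g' d', lookup M (g', d') = Some true -> exists k, decide k g' d' = true.

Definition por (A B : memo -> bool * memo) (M : memo) : bool * memo :=
  let (x, M1) := A M in if x then (true, M1) else B M1.

Definition pand (A B : memo -> bool * memo) (M : memo) : bool * memo :=
  let (x, M1) := A M in if x then B M1 else (false, M1).

Definition pfail (M : memo) : bool * memo := (false, M).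

Fixpoint decideMemo (n : nat) (g d : aterm) (M : memo) {struct n} : bool * memo :=
  match lookup M (g, d) with
  | Some b => (b, M)
  | None =>
      let '(b, M') :=
        match n with
        | O => (false, M)
        | S m =>
            let rec := fun g1 d1 M0 => decideMemo m g1 d1 M0 in
            por (fun M0 => match g, d with
                           | L (Var a), R (Var b) =>
                               if Pos.eq_dec a b then (true, M0) else (false, M0)
                           | _, _ => (false, M0) end)
            (por (rec g N)
            (por (match d with N => rec g g | _ => pfail end)
            (por (match g with L (Meet a b) => rec (L a) d | _ => pfail end)
            (por (match g with L (Meet a b) => rec (L b) d | _ => pfail end)
            (por (match g with L (Join a b) => pand (rec (L a) d) (rec (L b) d)
                              | _ => pfail end)
            (por (match g with L (Not a) => rec (R a) d | _ => pfail end)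
            (por (match g with R (Join a b) => rec (R a) d | _ => pfail end)
            (por (match g with R (Join a b) => rec (R b) d | _ => pfail end)
            (por (match g with R (Meet a b) => pand (rec (R a) d) (rec (R b) d)
                              | _ => pfail end)
            (por (match g with R (Not a) => rec (L a) d | _ => pfail end)
                 (rec d g))))))))))) M
        end in
      (b, update M' (g, d) b)
  end.

(* Main.v *)
Require Import Defs.
From Stdlib Require Import PArith List Bool Lia.
Import ListNotations.

Ltac solve_or := first [ assumption | reflexivity | solve [eauto] | split; solve_or
  | left; solve_or | right; solve_or ].

Lemma decide_step k k' g d :
  (forall g' d', decide k g' d' = true -> decide k' g' d' = true) ->
  decide (S k) g d = true -> decide (S k') g d = true.
Proof.
  intros Hf H. simpl in *.
  destruct g as [|[]|[]]; destruct d as [|[]|[]]; simpl in *;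
  repeat rewrite ?orb_true_iff, ?andb_true_iff in *;
  repeat match goal with
         | Hx : _ \/ _ |- _ => destruct Hx
         | Hx : _ /\ _ |- _ => destruct Hx
         end; try discriminate; solve_or.
Qed.

Lemma decide_S k : forall g d, decide k g d = true -> decide (S k) g d = true.
Proof.
  induction k; intros g d H; [discriminate|].
  eapply decide_step; [exact IHk | exact H].
Qed.

Lemma decide_mono k k' g d : k <= k' -> decide k g d = true -> decide k' g d = true.
Proof.
  induction 1; auto. intros Hd; apply decide_S; auto.
Qed.

Definition E g d := exists k, decide k g d = true.

Definition Good (A : memo -> bool * memo) (P : Prop) :=
  forall M, memo_correct M -> memo_correct (snd (A M)) /\ (fst (A M) = true -> P).

Lemma good_por A B P : Good A P -> Good B P -> Good (por A B) P.
Proof.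
  unfold Good, por; intros HA HB M HM.
  destruct (HA M HM) as [H1 H2]. destruct (A M) as [x M1]; simpl in *.
  destruct x; simpl; auto.
Qed.

Lemma good_pand A B P1 P2 P : Good A P1 -> Good B P2 -> (P1 -> P2 -> P) -> Good (pand A B) P.
Proof.
  unfold Good, pand; intros HA HB Hi M HM.
  destruct (HA M HM) as [H1 H2]. destruct (A M) as [x M1]; simpl in *.
  destruct x; simpl.
  - destruct (HB M1 H1) as [H3 H4]. split; auto.
  - split; [assumption|discriminate].
Qed.

Lemma good_fail P : Good pfail P.
Proof. unfold Good, pfail; simpl; split; auto; discriminate. Qed.

Lemma good_true P : P -> Good (fun M0 => (true, M0)) P.
Proof. unfold Good; simpl; auto. Qed.

Lemma good_false P : Good (fun M0 => (false, M0)) P.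
Proof. unfold Good; simpl; split; auto; discriminate. Qed.

Lemma good_weak A P Q : Good A P -> (P -> Q) -> Good A Q.
Proof. unfold Good; intros H Hi M HM; destruct (H M HM); auto. Qed.

Lemma update_correct M g d b :
  memo_correct M -> (b = true -> E g d) -> memo_correct (update M (g, d) b).
Proof.
  unfold memo_correct, update; intros HM Hb g' d' Hs. cbn [lookup] in Hs.
  destruct (pair_eq_dec (g', d') (g, d)) as [e|]; auto.
  injection e; intros; subst. injection Hs; auto.
Qed.

Lemma E_lift g d g1 d1 :
  (forall k, decide k g1 d1 = true -> decide (S k) g d = true) -> E g1 d1 -> E g d.
Proof. intros H [k Hk]; exists (S k); auto. Qed.

Lemma E_lift2 g d g1 d1 g2 d2 :
  (forall k, decide k g1 d1 = true -> decide k g2 d2 = true -> decide (S k) g d = true) ->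
  E g1 d1 -> E g2 d2 -> E g d.
Proof.
  intros H [k1 Hk1] [k2 Hk2]; exists (S (Nat.max k1 k2)). apply H.
  - eapply decide_mono; [|eassumption]; lia.
  - eapply decide_mono; [|eassumption]; lia.
Qed.

Lemma main n : forall g d, Good (decideMemo n g d) (E g d).
Proof.
  induction n; intros g d M HM; simpl.
  - destruct (lookup M (g, d)) eqn:Hl.
    + simpl; split; auto. intros ->. apply (HM g d Hl).
    + simpl; split; [apply update_correct; auto; discriminate | discriminate].
  - destruct (lookup M (g, d)) eqn:Hl.
    + simpl; split; auto. intros ->. apply (HM g d Hl).
    + match goal with |- context [let '(_, _) := ?F M in _] =>
        assert (HG : Good F (E g d)) end.
      2:{ destruct (HG M HM) as [H1 H2].
          match goal with |- context [let '(_, _) := ?X in _] => destruct X end.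
          simpl in *. split; auto. apply update_correct; auto. }
      clear M HM Hl.
      assert (R : forall g1 d1, (forall k, decide k g1 d1 = true -> decide (S k) g d = true) ->
                 Good (decideMemo n g1 d1) (E g d)).
      { intros g1 d1 Hi. eapply good_weak; [apply IHn|]. apply E_lift; auto. }
      assert (R2 : forall g1 d1 g2 d2, (forall k, decide k g1 d1 = true -> decide k g2 d2 = true -> decide (S k) g d = true) ->
                 Good (pand (decideMemo n g1 d1) (decideMemo n g2 d2)) (E g d)).
      { intros. eapply good_pand; [apply IHn|apply IHn|]. apply E_lift2; auto. }
      repeat apply good_por.
      all: destruct g as [|[a|a b|a b|a]|[a|a b|a b|a]]; destruct d as [|[c|c e|c e|c]|[c|c e|c e|c]];
        cbv beta iota.
      all: first
        [ apply good_fail | apply good_false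
        | (destruct (Pos.eq_dec a c) as [Heq|]; [apply good_true; subst; exists 1; simpl;
             destruct (Pos.eq_dec _ _) as [|Hn]; [reflexivity|congruence] | apply good_false])
        | (apply R; intros k Hk; simpl in *;
             repeat rewrite ?orb_true_iff, ?andb_true_iff; solve_or)
        | (apply R2; intros k Hk1 Hk2; simpl in *;
             repeat rewrite ?orb_true_iff, ?andb_true_iff; solve_or) ].
Qed.

Theorem mainTheorem3 (n : nat) (g d : aterm) (M : memo) :
  memo_correct M ->
  memo_correct (snd (decideMemo n g d M)) /\
  (fst (decideMemo n g d M) = true -> exists k, decide k g d = true).
Proof. intros HM. exact (main n g d M HM). Qed.
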